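(* Let $\Phi$ be a local interaction on $V$, let $\mathcal S=\{X\in\mathcal P_f(V):\Phi_X\neq0\}$, and let $\mathbf c,\mathbf u:\mathcal P_f(V)\to[0,\infty)$ satisfy, for every $Z\in\mathcal S$, $$\sum_{X\in\mathcal S}\chi(Z,X)\,\mathbf u(X)\,e^{\mathbf c(X)}\le\mathbf c(Z).$$ Then for every $Z\in\mathcal S$, $$\sum_{k=1}^\infty\sum_{[X_1,\dots,X_k]\in\mathbb S_k}\chi(Z,X_1,\dots,X_k)\prod_{j=1}^k\mathbf u(X_j)\le e^{\mathbf c(Z)}-1$$ and $$\sum_{k=1}^\infty\sum_{[X_1,\dots,X_k]\in\mathbb P_k}\chi(Z,X_1,\dots,X_k)\prod_{j=1}^k\mathbf u(X_j)\le\mathbf c(Z).$$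
   Context: $\mathcal P_f(V)$ is the set of finite subsets of a set $V$; a local interaction is a family $(\Phi_X)_{X\in\mathcal P_f(V)}$ of self-adjoint operators $\Phi_X$ acting on the sites of $X$. A finite multiset $[Y_1,\dots,Y_m]$ of finite subsets of $V$ is connected if its elements can be ordered so that each $Y_j$ ($j\ge 2$) intersects $Y_1\cup\dots\cup Y_{j-1}$; $\chi(Y_1,\dots,Y_m)=1$ if $[Y_1,\dots,Y_m]$ is connected and $0$ otherwise. $\mathbb S_k$ is the set of all multisets consisting of $k$ elements (with multiplicity) of $\mathcal S$, and $\mathbb P_k\subset\mathbb S_k$ the connected ones; in the sums each multiset is counted once. *)

(* Defs.v *)
From HB Require Import structures.
From mathcomp Require Import all_boot all_order all_algebra.
From mathcomp Require Import finmap multiset.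
From mathcomp Require Import all_classical all_reals all_analysis.
Set Implicit Arguments. Unset Strict Implicit. Unset Printing Implicit Defensive.
Import Order.TTheory GRing.Theory Num.Theory.
Local Open Scope ring_scope.

Section Defs.
Variable V : choiceType.

Definition chain_connected (t : seq {fset V}) : bool :=
  [forall j : 'I_(size t),
     (nat_of_ord j == 0)%N ||
     (fsetI (nth fset0 t j) (\big[@fsetU _/fset0]_(Y <- take j t) Y) != fset0)].

(* A finite multiset (given by any listing s of its elements) is connected
   if its elements can be ordered so that the chain condition holds. *)
Definition connected_seq (s : seq {fset V}) : Prop :=
  exists2 t, perm_eq s t & chain_connected t.

Definition chi (R : realType) (s : seq {fset V}) : R :=
  if `[< connected_seq s >] then 1 else 0.

Definition mset_S (S : set {fset V}) (k : nat) : set {mset {fset V}}%mset :=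
  [set M | size (enum_mset M) = k /\ (forall X, X \in enum_mset M -> S X)].

Definition mset_P (S : set {fset V}) (k : nat) : set {mset {fset V}}%mset :=
  [set M | mset_S S k M /\ connected_seq (enum_mset M)].

Definition mweight (R : realType) (u : {fset V} -> R) (M : {mset {fset V}}%mset) : R :=
  \prod_(X <- enum_mset M) u X.

End Defs.

(* Main.v *)
Require Import Defs.
From HB Require Import structures.
From mathcomp Require Import all_boot all_order all_algebra.
From mathcomp Require Import finmap multiset.
From mathcomp Require Import all_classical all_reals all_analysis.
From mathcomp Require Import ring lra.
Import Order.TTheory GRing.Theory Num.Theory.
Set Implicit Arguments. Unset Strict Implicit. Unset Printing Implicit Defensive.
Section Chain.
Variable V : choiceType.
Local Open Scope fset_scope.
Implicit Types (U W X Y : {fset V}) (t s : seq {fset V}).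

Definition bigU t : {fset V} := \big[@fsetU _/fset0]_(Y <- t) Y.

Fixpoint chainb U t : bool :=
  if t is x :: t' then (fsetI x U != fset0) && chainb (fsetU U x) t' else true.

Definition chainc t := if t is x :: t' then chainb x t' else true.

Lemma bigU_cons x t : bigU (x :: t) = x `|` bigU t.
Proof. by rewrite /bigU big_cons. Qed.

Lemma bigU_cat t1 t2 : bigU (t1 ++ t2) = bigU t1 `|` bigU t2.
Proof. by rewrite /bigU big_cat. Qed.

Lemma bigU_perm t1 t2 : perm_eq t1 t2 -> bigU t1 = bigU t2.
Proof. by move=> p; rewrite /bigU (perm_big _ p). Qed.

Lemma chainb_cat U t1 t2 :
  chainb U (t1 ++ t2) = chainb U t1 && chainb (U `|` bigU t1) t2.
Proof.
elim: t1 U => [|x t1 IH] U /=; first by rewrite /bigU big_nil fsetU0.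
by rewrite IH bigU_cons fsetUA andbA.
Qed.

Lemma chainbP U t : reflect (forall j, (j < size t)%N ->
   fsetI (nth fset0 t j) (U `|` \big[@fsetU _/fset0]_(Y <- take j t) Y) != fset0)
  (chainb U t).
Proof.
elim: t U => [|x t IH] U /=; first by apply: ReflectT.
apply: (iffP andP) => [[h1 /IH h2] [|j] /= hj|h].
- by rewrite big_nil fsetU0.
- by rewrite big_cons fsetUA; apply: h2.
split; first by have := h 0%N isT; rewrite /= big_nil fsetU0.
apply/IH => j hj; have := h j.+1 hj; by rewrite /= big_cons fsetUA.
Qed.

Lemma chain_connectedE t : chain_connected t = chainc t.
Proof.
case: t => [|x t] /=; rewrite /chain_connected.
  by apply/forallP => -[].
apply/forallP/chainbP => [h j hj|h j].
  have := h (Ordinal (hj : (j.+1 < size (x :: t))%N)); rewrite /= big_cons.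
  by [].
case: j => -[|j] //= hj.
have := h j hj; by rewrite big_cons.
Qed.

Lemma chainb_monoU U U' t : U `<=` U' -> chainb U t -> chainb U' t.
Proof.
elim: t U U' => [|x t IH] U U' //= sUU' /andP[h1 h2]; apply/andP; split.
  apply: contraNneq h1 => h; apply/eqP/fsetP => z; rewrite inE.
  apply/negbTE/negP => /andP[zx zU].
  by have := in_fset0 z; rewrite -h inE zx (fsubsetP sUU').
by apply: IH h2; apply: fsetSU.
Qed.

Lemma chainb_rem U t1 x t2 : chainb U (t1 ++ x :: t2) ->
  x `<=` U `|` bigU t1 -> chainb U (t1 ++ t2).
Proof.
rewrite !chainb_cat /= => /andP[-> /andP[_ h]] sx /=.
by apply: chainb_monoU h; rewrite fsubUset fsubset_refl sx.
Qed.

Lemma meet_bigU X t : fsetI X (bigU t) != fset0 ->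
  exists2 x, x \in t & fsetI x X != fset0.
Proof.
elim: t => [|y t IH]; first by rewrite /bigU big_nil fsetI0 eqxx.
rewrite bigU_cons fsetIUr => h.
have [hy|hy] := eqVneq (fsetI X y) fset0.
  move: h; rewrite hy fset0U => /IH[x xt hx]; exists x => //.
  by rewrite inE xt orbT.
by exists y; rewrite ?mem_head // fsetIC.
Qed.

Lemma chainb_rcons U t z :
  chainb U (rcons t z) = chainb U t && (fsetI z (U `|` bigU t) != fset0).
Proof. by rewrite -cats1 chainb_cat /= andbT. Qed.

Lemma reroot t : chainc t -> forall a, a \in t ->
  exists2 t', perm_eq t (a :: t') & chainb a t'.
Proof.
elim/last_ind: t => [//|t z IH].
case: t IH => [|h r] IH.
  move=> _ a; rewrite /= inE => /eqP ->; by exists [::].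
move=> hcz a; rewrite mem_rcons inE; move: hcz.
rewrite rcons_cons /= chainb_rcons => /andP[hc hz] /orP[/eqP ->|ain].
  have : fsetI z (bigU (h :: r)) != fset0 by rewrite bigU_cons.
  move=> /meet_bigU[x xin hx].
  have [t' pt' ct'] := IH hc x xin.
  exists (x :: t').
    by rewrite -rcons_cons perm_rcons perm_cons.
  rewrite /= hx /=.
  by apply: chainb_monoU ct'; rewrite fsubsetUr.
have [t' pt' ct'] := IH hc a ain.
exists (rcons t' z).
  by rewrite -!cats1 -!cat_cons perm_cat2r.
rewrite chainb_rcons ct' /=.
have -> : a `|` bigU t' = bigU (h :: r).
  by rewrite -bigU_cons; apply/esym/bigU_perm.
by rewrite bigU_cons.
Qed.


Definition rconnb U s := has (chainb U) (permutations s).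

Lemma rconnbP U s : reflect (exists2 t, perm_eq s t & chainb U t) (rconnb U s).
Proof.
apply: (iffP hasP) => [[t tin ct]|[t pt ct]]; exists t => //.
  by rewrite perm_sym -mem_permutations.
by rewrite mem_permutations perm_sym.
Qed.

Lemma rconnb_perm U s s' : perm_eq s s' -> rconnb U s -> rconnb U s'.
Proof.
move=> p /rconnbP[t pt ct]; apply/rconnbP; exists t => //.
by apply: perm_trans pt; rewrite perm_sym.
Qed.

Lemma conn_rconn s Y s' : connected_seq s -> perm_eq s (Y :: s') -> rconnb Y s'.
Proof.
move=> [t pt]; rewrite chain_connectedE => ct ps.
have Yt : Y \in t by rewrite -(perm_mem pt) (perm_mem ps) mem_head.
have [t' pt' ct'] := reroot ct Yt.
apply/rconnbP; exists t' => //.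
rewrite -(perm_cons Y); apply: (perm_trans _ pt').
by apply: (perm_trans _ pt); rewrite perm_sym.
Qed.

Lemma rconnb_absorb U Y s : rconnb U (Y :: s) -> rconnb (U `|` Y) s.
Proof.
move=> /rconnbP[t pt ct].
have Yt : Y \in t by rewrite -(perm_mem pt) mem_head.
case/splitPr: Yt pt ct => t1 t2 pt ct.
apply/rconnbP; exists (t1 ++ t2).
  rewrite -(perm_cons Y); apply: (perm_trans pt).
  by rewrite (perm_catCA t1 [:: Y] t2).
apply: (@chainb_rem _ t1 Y t2).
  by apply: chainb_monoU ct; rewrite fsubsetUl.
rewrite -fsetUA; apply: fsubset_trans (fsubsetUl Y (bigU t1)) _.
by rewrite fsubsetUr.
Qed.

Lemma rconnb_first U s : rconnb U s -> s != [::] ->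
  exists2 X, X \in s & fsetI X U != fset0.
Proof.
move=> /rconnbP[[|x t] pt ct] sn0.
  by move: sn0; rewrite (perm_nilP pt).
exists x; first by rewrite (perm_mem pt) mem_head.
by case/andP: ct.
Qed.

Lemma rconnb_nil U : rconnb U [::].
Proof. by apply/rconnbP; exists [::]. Qed.

Lemma conn_pair Z X : fsetI X Z != fset0 -> connected_seq [:: Z; X].
Proof. by move=> h; exists [:: Z; X] => //; rewrite chain_connectedE /= h. Qed.

Local Open Scope mset_scope.
Implicit Types (M : {mset {fset V}}).

Lemma perm_msetB1 M Y : Y \in M -> perm_eq (enum_mset M) (Y :: enum_mset (M `\ Y)).
Proof.
move=> YM; apply/allP => x _ /=.
rewrite !count_mem_mset msetB1E.
have := YM; rewrite in_mset => YM'.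
case: (eqVneq Y x) => [<-|nx] /=. 
  by rewrite add1n subn1 prednK.
by rewrite add0n subn0.
Qed.

Lemma enum_mset_nil M : enum_mset M = [::] -> M = mset0.
Proof.
move=> h; apply/msetP => x; rewrite -!count_mem_mset h.
by rewrite (@enum_mset0 {fset V}).
Qed.

End Chain.

Section Core.
Variables (V : choiceType) (R : realType) (u c : {fset V} -> R).
Local Open Scope ring_scope.
Hypothesis u0 : forall X, 0 <= u X.
Local Open Scope ring_scope.
Implicit Types (X Y W : {fset V}) (T : {fset {fset V}}) (M : {mset {fset V}}%mset).

Definition a X := u X * expR (c X).
Lemma a0 X : 0 <= a X. Proof. by rewrite /a mulr_ge0 // expR_ge0. Qed.

Definition g W M : R := if rconnb W (enum_mset M) then mweight u M else 0.
Definition P T W : R := \prod_(X <- T | fsetI X W != fset0) (1 + a X).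
Definition Thyp T := forall Y, Y \in T -> \sum_(X <- T | fsetI X Y != fset0) a X <= c Y.

Lemma mweight_ge0 M : 0 <= mweight u M.
Proof. by rewrite /mweight prodr_ge0. Qed.

Lemma g_ge0 W M : 0 <= g W M.
Proof. by rewrite /g; case: ifP => // _; apply: mweight_ge0. Qed.

Lemma P_ge1 T W : 1 <= P T W.
Proof.
rewrite /P; apply: (big_ind (fun x => 1 <= x)) => //.
  by move=> x y; apply: mulr_ege1.
by move=> X _; rewrite lerDl a0.
Qed.

Lemma P_exp T W : P T W <= expR (\sum_(X <- T | fsetI X W != fset0) a X).
Proof.
by rewrite expR_sum /P; apply: ler_prod => X _; rewrite addr_ge0 ?a0 ?expR_ge1Dx.
Qed.

Lemma big_fsetD1_cond (idx : R) (op : Monoid.com_law idx) Y T (Q : pred {fset V}) F :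
  Y \in T -> \big[op/idx]_(X <- T | Q X) F X =
     op (if Q Y then F Y else idx) (\big[op/idx]_(X <- (T `\ Y)%fset | Q X) F X).
Proof.
by move=> YT; rewrite big_mkcond (big_fsetD1 Y) //= -big_mkcond.
Qed.

Arguments big_fsetD1_cond {idx op Y T Q F}.

Lemma Thyp_rem T Y : Thyp T -> Thyp (T `\ Y)%fset.
Proof.
move=> h Z; rewrite !inE => /andP[_ ZT].
apply: le_trans (h Z ZT).
case: (boolP (Y \in T)) => YT.
  rewrite (big_fsetD1_cond YT) lerDr.
  by case: ifP => // _; apply: a0.
rewrite le_eqVlt; apply/orP; left; apply/eqP.
apply: eq_fbigl_cond => X; rewrite !inE.
by case: (eqVneq X Y) => // ->; rewrite (negbTE YT).
Qed.

Lemma prod_sub (r : seq {fset V}) (Q1 Q2 : pred {fset V}) (f : {fset V} -> R) :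
  (forall X, Q1 X -> Q2 X) -> (forall X, 1 <= f X) ->
  \prod_(X <- r | Q1 X) f X <= \prod_(X <- r | Q2 X) f X.
Proof.
move=> h f1; rewrite [X in _ <= X](bigID Q1) /=.
rewrite (eq_bigl Q1); last first.
  move=> X; case: (boolP (Q1 X)) => [q1|]; last by rewrite andbF.
  by rewrite (h X q1).
apply: ler_peMr.
  by apply: prodr_ge0 => X _; apply: le_trans (f1 X).
apply: (big_ind (fun x => 1 <= x)) => //.
by move=> x y; apply: mulr_ege1.
Qed.

Lemma alg T Y W : Thyp T -> Y \in T -> fsetI Y W != fset0 ->
  P (T `\ Y)%fset W + u Y * P T (fsetU W Y) <= P T W.
Proof.
move=> hT YT YW.
have Y0 : fsetI Y Y != fset0.
  apply: contraNneq YW; rewrite fsetIid => ->; by rewrite fset0I.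
set Q := P (T `\ Y)%fset W.
have PTW : P T W = (1 + a Y) * Q by rewrite /P (big_fsetD1_cond YT) YW.
pose E := \prod_(X <- T | (fsetI X (fsetU W Y) != fset0) && ~~ (fsetI X W != fset0)) (1 + a X).
have PTWY : P T (fsetU W Y) = P T W * E.
  rewrite /P (bigID (fun X => fsetI X W != fset0)) /=; congr (_ * _).
  apply: eq_bigl => X; rewrite fsetIUr fsetU_eq0 negb_and.
  by case: (fsetI X W != fset0); rewrite ?andbT ?andbF.
have hE : (1 + a Y) * E <= expR (c Y).
  apply: (le_trans _ (le_trans (P_exp T Y) _)); last by rewrite ler_expR; apply: hT.
  rewrite /P (big_fsetD1_cond YT) Y0 ler_wpM2l ?addr_ge0 ?a0 //.
  rewrite /E (big_fsetD1_cond YT) YW /= andbF mul1r.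
  apply: prod_sub => [X|X]; last by rewrite lerDl a0.
  rewrite fsetIUr fsetU_eq0 negb_and => /andP[/orP[->//|h]].
  by rewrite h.
have Q0 : 0 <= Q by apply: le_trans (P_ge1 _ _).
have h1 : u Y * ((1 + a Y) * Q * E) = (u Y * Q) * ((1 + a Y) * E) by ring.
have h2 : (u Y * Q) * ((1 + a Y) * E) <= (u Y * Q) * expR (c Y).
  by rewrite ler_wpM2l // mulr_ge0.
rewrite PTWY PTW h1; apply: le_trans (lerD (lexx Q) h2) _.
rewrite le_eqVlt; apply/orP; left; apply/eqP; rewrite /a; ring.
Qed.

Local Open Scope fset_scope.

Lemma mweight0 : mweight u mset0%mset = 1.
Proof. by rewrite /mweight (@enum_mset0 {fset V}) big_nil. Qed.

Lemma mweight_rem M Y : Y \in enum_mset M ->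
  mweight u M = u Y * mweight u (M `\ Y)%mset.
Proof. by move=> YM; rewrite /mweight (perm_big _ (perm_msetB1 YM)) big_cons. Qed.

Lemma base_case T W (F : {fset {mset {fset V}}%mset}) :
  (forall M, M \in F -> rconnb W (enum_mset M) -> enum_mset M = [::]) ->
  \sum_(M <- F) g W M <= P T W.
Proof.
move=> h; apply: le_trans (P_ge1 T W).
rewrite (bigID (fun M => M == mset0%mset)) /=.
rewrite [X in (_ + X)%R]big_seq_cond [X in (_ + X)%R]big1 ?addr0; last first.
  move=> M /andP[MF Mn0]; rewrite /g; case: ifP => // hc.
  by move: Mn0; rewrite (enum_mset_nil (h M MF hc)) eqxx.
have g01 : g W mset0%mset <= 1 by rewrite /g mweight0; case: ifP.
case: (boolP (mset0%mset \in F)) => [m0F|m0F].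
  rewrite (_ : \sum_(M <- F | M == mset0%mset) g W M = g W mset0%mset) //.
  exact: (@fbig_pred1_inj _ _ _ _ _ _ id F _ m0F).
rewrite big_seq_cond big1 // => M /andP[MF /eqP eM].
by move: m0F; rewrite -eM MF.
Qed.

Lemma noneighbor T W (F : {fset {mset {fset V}}%mset}) :
  (forall M, M \in F -> forall X, X \in enum_mset M -> X \in T) ->
  ~~ has (fun Y => fsetI Y W != fset0) T ->
  \sum_(M <- F) g W M <= P T W.
Proof.
move=> hF /hasPn hn; apply: base_case => M MF hc.
apply/eqP; apply: contraTT isT => Mn0.
have [X XM XW] := rconnb_first hc Mn0.
by have := hn X (hF M MF X XM); rewrite XW.
Qed.

Lemma core n : forall T W (F : {fset {mset {fset V}}%mset}), Thyp T ->
  (forall M, M \in F -> (size (enum_mset M) <= n)%N /\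
                        (forall X, X \in enum_mset M -> X \in T)) ->
  \sum_(M <- F) g W M <= P T W.
Proof.
elim: n => [|n IHn] T W F hT hF.
  apply: base_case => M MF _; have [+ _] := hF M MF.
  by rewrite leqn0 size_eq0 => /eqP.
have [k] := ubnP #|`T|.
elim: k T W F hT hF => [//|k IHk] T W F hT hF hk.
case: (boolP (has (fun Y => fsetI Y W != fset0) T)); last first.
  by apply: noneighbor => M MF; case: (hF M MF).
move=> /hasP[Y YT YW].
rewrite (bigID (fun M => Y \in enum_mset M)) /= addrC.
apply: le_trans (alg hT YT YW); apply: lerD.
  rewrite big_fset_condE; apply: IHk; first exact: Thyp_rem.
    move=> M; rewrite !inE => /andP[MF YM]; have [h1 h2] := hF M MF.
    split => // X XM; rewrite !inE h2 // andbT.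
    by apply: contraNneq YM => <-.
  by move: hk; rewrite (cardfsD1 Y) YT.
apply: le_trans (_ : _ <= \sum_(M <- F | Y \in enum_mset M)
                        u Y * g (fsetU W Y) (M `\ Y)%mset) _.
  apply: ler_sum => M YM; rewrite /g.
  case: ifP => hc; last by rewrite mulr_ge0 // -/(g _ _) g_ge0.
  have hc' := rconnb_absorb (rconnb_perm (perm_msetB1 YM) hc).
  by rewrite hc' (mweight_rem YM).
rewrite -mulr_sumr ler_wpM2l // big_fset_condE.
set F2 := [fset M in F | Y \in enum_mset M].
have inj : {in F2 &, injective (fun M => (M `\ Y)%mset)}.
  move=> M1 M2; rewrite !inE => /andP[_ Y1] /andP[_ Y2] e.
  by rewrite -(msetB1K Y1) -(msetB1K Y2) e.
rewrite -(big_imfset _ tt (g (fsetU W Y)) inj).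
apply: IHn => // M' /imfsetP[M]; rewrite !inE /= => /andP[MF YM] ->.
have [h1 h2] := hF M MF; have pM := perm_msetB1 YM.
split.
  by move: h1; rewrite (perm_size pM).
by move=> X XM; apply: h2; rewrite (perm_mem pM) inE XM orbT.
Qed.

Lemma core_rem n T Y W (F : {fset {mset {fset V}}%mset}) : Thyp T ->
  (forall M, M \in F -> (size (enum_mset M) <= n)%N /\
                        (forall X, X \in enum_mset M -> X \in T)) ->
  \sum_(M <- F | Y \in enum_mset M) g W (M `\ Y)%mset <= P T W.
Proof.
move=> hT hF; rewrite big_fset_condE.
set F2 := [fset M in F | Y \in enum_mset M].
have inj : {in F2 &, injective (fun M => (M `\ Y)%mset)}.
  move=> M1 M2; rewrite !inE => /andP[_ Y1] /andP[_ Y2] e.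
  by rewrite -(msetB1K Y1) -(msetB1K Y2) e.
rewrite -(big_imfset _ tt (g W) inj).
apply: (@core n) => // M' /imfsetP[M]; rewrite !inE /= => /andP[MF YM] ->.
have [h1 h2] := hF M MF; have pM := perm_msetB1 YM.
split.
  by move: h1; rewrite (perm_size pM) => /ltnW.
by move=> X XM; apply: h2; rewrite (perm_mem pM) inE XM orbT.
Qed.

End Core.

Local Open Scope ring_scope.
Local Open Scope classical_set_scope.

Lemma series_esum_le (R : realType) (T : choiceType) (J : nat -> set T) (f : T -> R) (B : R) :
  (forall M, 0 <= f M) -> trivIset setT J ->
  (forall F : {fset T}, (forall M, M \in F -> exists2 k, (1 <= k)%N & J k M) ->
      \sum_(M <- F) f M <= B) ->
  (\sum_(1 <= k <oo) \esum_(M in J k) (f M)%:E <= B%:E)%E.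
Proof.
move=> f0 tJ hF.
rewrite eseries_cond.
rewrite nneseries_esum; last by move=> k _; apply: esum_ge0 => M _; rewrite lee_fin.
have f0' : forall M, (0 <= (f M)%:E)%E by move=> M; rewrite lee_fin.
rewrite -(esum_bigcupT J) //.
apply: ge_ereal_sup => _ [A [finA sA] <-].
rewrite fsbig_finite //= sumEFin lee_fin; apply: hF => M.
rewrite in_fset_set // inE => /sA [k /= k1 JkM].
by exists k.
Qed.

Lemma chi_01 (R : realType) (V : choiceType) (s : seq {fset V}) : 0 <= chi R s <= 1.
Proof. by rewrite /chi; case: ifP => _; rewrite ?lexx ?ler01. Qed.

Lemma chi1 (R : realType) (V : choiceType) (s : seq {fset V}) :
  connected_seq s -> chi R s = 1.
Proof. by move=> h; rewrite /chi asboolT. Qed.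

Lemma chi_conn (R : realType) (V : choiceType) (s : seq {fset V}) :
  chi R s != 0 -> connected_seq s.
Proof. by rewrite /chi; case: asboolP => // _; rewrite eqxx. Qed.

Lemma trivI_size (V : choiceType) (J : nat -> set {mset {fset V}}%mset) :
  (forall k M, J k M -> size (enum_mset M) = k) -> trivIset setT J.
Proof.
move=> h i j _ _ [M [Mi Mj]].
by rewrite -(h _ _ Mi) -(h _ _ Mj).
Qed.

Unset Implicit Arguments. Set Strict Implicit.

Theorem lemma3p12 (R : realType) (V : choiceType) (A : zmodType)
  (Phi : {fset V} -> A) (c u : {fset V} -> R) :
  let S := [set X : {fset V} | Phi X != 0] in
  (forall X, 0 <= c X) -> (forall X, 0 <= u X) ->
  (forall Z, S Z ->
     (\esum_(X in S) (chi R [:: Z; X] * u X * expR (c X))%:E <= (c Z)%:E)%E) ->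
  forall Z, S Z ->
    (\sum_(1 <= k <oo)
        \esum_(M in mset_S S k) (chi R (Z :: enum_mset M) * mweight u M)%:E
       <= (expR (c Z) - 1)%:E)%E /\
    (\sum_(1 <= k <oo)
        \esum_(M in mset_P S k) (chi R (Z :: enum_mset M) * mweight u M)%:E
       <= (c Z)%:E)%E.
Proof.
move=> S c0 u0 hyp Z SZ.
have K1 : forall (T : {fset {fset V}}) Y, (forall X, X \in T -> S X) -> S Y ->
    \sum_(X <- T | (X `&` Y)%fset != fset0) a u c X <= c Y.
  move=> T Y TS SY; rewrite -lee_fin; apply: le_trans (hyp Y SY).
  apply: esum_ge; exists [set` T].
    by split; [exact: finite_fset | move=> X /= /TS].
  rewrite fsbig_finite ?set_fsetK //= sumEFin lee_fin big_mkcond /=.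
  apply: ler_sum => X _; case: ifP => h.
    by rewrite chi1 ?mul1r //; apply: conn_pair.
  have /andP[ch0 _] := chi_01 R [:: Y; X].
  by rewrite !mulr_ge0 ?expR_ge0.
have mw0 := mweight_ge0 u0.
have f0 : forall M, 0 <= chi R (Z :: enum_mset M) * mweight u M.
  move=> M; have /andP[ch0 _] := chi_01 R (Z :: enum_mset M).
  by rewrite mulr_ge0.
have chig : forall M, chi R (Z :: enum_mset M) * mweight u M <= g u Z M.
  move=> M; rewrite /g; case: (eqVneq (chi R (Z :: enum_mset M)) 0) => [->|h].
    by rewrite mul0r; case: ifP.
  have hc : rconnb Z (enum_mset M) by apply: (conn_rconn (chi_conn h) (perm_refl _)).
  by rewrite hc (chi1 R (chi_conn h)) mul1r.
have bigT : forall F : {fset {mset {fset V}}%mset},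
    (forall M, M \in F -> forall X, X \in enum_mset M -> S X) ->
    exists T : {fset {fset V}}, [/\ forall M X, M \in F -> X \in enum_mset M -> X \in T,
       forall X, X \in T -> S X & Thyp u c T].
  move=> F hF; exists [fset X in flatten [seq enum_mset M | M <- F]]%fset.
  have TS : forall X, X \in [fset X in flatten [seq enum_mset M | M <- F]]%fset -> S X.
    move=> X; rewrite inE => /flattenP[s /mapP[M MF ->] XM]; exact: (hF M MF X XM).
  split => //.
    move=> M X MF XM; rewrite inE; apply/flattenP; exists (enum_mset M) => //.
    by apply/mapP; exists M.
  by move=> Y YT; apply: K1 => //; apply: TS.
split.
  apply: series_esum_le => //; first by apply: trivI_size => k M [].
  move=> F hF.
  have hF' : forall M, M \in F -> (1 <= size (enum_mset M))%N /\ (forall X, X \in enum_mset M -> S X).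
    by move=> M /hF [k k1 [sz hS]]; rewrite sz.
  have [T [memT TS hT]] := bigT F (fun M MF => (hF' M MF).2).
  pose n := (\max_(M <- F) size (enum_mset M))%N.
  have m0F : mset0%mset \notin F.
    by apply/negP => /hF'[]; rewrite (@enum_mset0 {fset V}).
  have := @core V R u c u0 n T Z (mset0 |` F)%fset hT.
  rewrite big_fsetU1 //=.
  have -> : g u Z mset0 = 1 by rewrite /g (@enum_mset0 {fset V}) rconnb_nil mweight0.
  have hP : P u c T Z <= expR (c Z).
    by apply: le_trans (P_exp c u0 T Z) _; rewrite ler_expR; apply: K1.
  move=> /(_ _) h.
  have {h} h : 1 + \sum_(i <- F) g u Z i <= P u c T Z.
    apply: h => M; rewrite in_fset1U => /orP[/eqP ->|MF].
      by rewrite (@enum_mset0 {fset V}); split => // X; rewrite in_nil.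
    split; first by rewrite /n; apply: leq_bigmax_seq.
    by move=> X XM; apply: memT MF XM.
  apply: le_trans (ler_sum _ (fun M _ => chig M)) _.
  move: h hP; set s := \sum_(i <- F) g u Z i; set p := P u c T Z; lra.
apply: series_esum_le => //; first by apply: trivI_size => k M [[]].
move=> F hF.
have hF' : forall M, M \in F -> [/\ (1 <= size (enum_mset M))%N,
    (forall X, X \in enum_mset M -> S X) & connected_seq (enum_mset M)].
  by move=> M /hF [k k1 [[sz hS] hc]]; rewrite sz.
have [T [memT TS hT]] := bigT F (fun M MF => let: And3 _ h _ := hF' M MF in h).
pose n := (\max_(M <- F) size (enum_mset M))%N.
apply: le_trans (_ : _ <= \sum_(M <- F) \sum_(Y <- T | (Y `&` Z)%fset != fset0)
   (if Y \in enum_mset M then u Y * g u Y (M `\ Y)%mset else 0)) _.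
  rewrite big_seq [X in _ <= X]big_seq; apply: ler_sum => M MF.
  have hsum0 : forall Y, 0 <= (if Y \in enum_mset M then u Y * g u Y (M `\ Y)%mset else 0).
    by move=> Y; case: ifP => // _; rewrite mulr_ge0 // g_ge0.
  case: (eqVneq (chi R (Z :: enum_mset M)) 0) => [->|h].
    by rewrite mul0r sumr_ge0.
  have hc : rconnb Z (enum_mset M) by apply: (conn_rconn (chi_conn h) (perm_refl _)).
  have [sz1 _ hconn] := hF' M MF.
  have Mn0 : enum_mset M != [::] by rewrite -size_eq0 -lt0n.
  have [X XM XZ] := rconnb_first hc Mn0.
  rewrite (big_fsetD1_cond _ _ _ (memT M X MF XM)) XZ XM.
  have pM := perm_msetB1 XM.
  have hcX : rconnb X (enum_mset (M `\ X)%mset) by apply: (conn_rconn hconn pM).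
  rewrite /g hcX (chi1 R (chi_conn h)) mul1r (mweight_rem _ XM) lerDl.
  by apply: sumr_ge0 => Y _; apply: hsum0.
rewrite exchange_big /=.
apply: le_trans (K1 T Z TS SZ).
rewrite big_seq_cond [X in _ <= X]big_seq_cond.
apply: ler_sum => Y /andP[YT YZ].
rewrite -big_mkcond /= -mulr_sumr /a ler_wpM2l //.
apply: le_trans (@core_rem V R u c u0 n T Y Y F hT _) _.
  move=> M MF; split; first by rewrite /n; apply: leq_bigmax_seq.
  by move=> X XM; apply: memT MF XM.
by apply: le_trans (P_exp c u0 T Y) _; rewrite ler_expR; apply: K1 => //; apply: TS.
Qed.
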